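(* In the setting described in the context, assume $c>\max\{0.56\,b^3,\,0.001\,a_2^2b^2\}$ and $b>10^5$. If $z=v_m=w_n$ for some integers $m,n$ with $n\geq 4$, then $m\equiv n\pmod 2$; moreover $n>0.09226\,b^{-1/2}c^{1/4}$ if $n$ is odd, and $n>0.340134\,b^{-1/2}c^{1/2}$ if $n$ is even.
   Context: A $D(4)$-quadruple is a set of four distinct positive integers such that the product of any two distinct elements increased by $4$ is a perfect square. Setting: $a_1<a_2<b<c<d$ are positive integers such that $\{a_1,b,c,d\}$ and $\{a_2,b,c,d\}$ are $D(4)$-quadruples. Let $r_2,s_2,t,z$ be the positive integers with $a_2b+4=r_2^2$, $a_2c+4=s_2^2$, $bc+4=t^2$, $cd+4=z^2$. For integers $z_{(0)},x_{(0)},z_{(1)},y_{(1)}$ define the sequences $v_0=z_{(0)}$, $v_1=\frac12(s_2z_{(0)}+cx_{(0)})$, $v_{m+2}=s_2v_{m+1}-v_m$, and $w_0=z_{(1)}$, $w_1=\frac12(tz_{(1)}+cy_{(1)})$, $w_{n+2}=tw_{n+1}-w_n$. The value $z$ admits a representation $z=v_m=w_n$ with nonnegative integers $m,n$ where either (i) $m\equiv n\equiv 0\pmod 2$, $x_{(0)}=y_{(1)}=2$, $|z_{(0)}|=|z_{(1)}|=2$, $z_{(0)}z_{(1)}>0$; or (ii) $m\equiv n\equiv 1\pmod 2$, $x_{(0)}=y_{(1)}=r_2$, $|z_{(0)}|=t$, $|z_{(1)}|=s_2$, $z_{(0)}z_{(1)}>0$. The statement ''$z=v_m=w_n$'' refers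 to such a representation. *)

(* Defs.v *)
From Stdlib Require Import ZArith Reals Lia Lra.
Open Scope R_scope.

Definition is_square (x : Z) : Prop := exists k : Z, x = (k * k)%Z.

Definition D4_quadruple (a b c d : Z) : Prop :=
  (0 < a)%Z /\ (0 < b)%Z /\ (0 < c)%Z /\ (0 < d)%Z /\
  a <> b /\ a <> c /\ a <> d /\ b <> c /\ b <> d /\ c <> d /\
  is_square (a * b + 4) /\ is_square (a * c + 4) /\ is_square (a * d + 4) /\
  is_square (b * c + 4) /\ is_square (b * d + 4) /\ is_square (c * d + 4).

Fixpoint rec2_aux (P u0 u1 : R) (k : nat) : R * R :=
  match k with
  | O => (u0, u1)
  | S k' => let (x, y) := rec2_aux P u0 u1 k' in (y, P * y - x)
  end.

Definition rec2 (P u0 u1 : R) (k : nat) : R := fst (rec2_aux P u0 u1 k).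

Definition vseq (s2 c z0 x0 : Z) : nat -> R :=
  rec2 (IZR s2) (IZR z0) ((IZR s2 * IZR z0 + IZR c * IZR x0) / 2).

Definition wseq (t c z1 y1 : Z) : nat -> R :=
  rec2 (IZR t) (IZR z1) ((IZR t * IZR z1 + IZR c * IZR y1) / 2).

(* "z = v_m = w_n": a representation of z as described in the setting,
   case (i) or case (ii). *)
Definition z_rep (c r2 s2 t z : Z) (m n : nat) : Prop :=
  exists z0 x0 z1 y1 : Z,
    IZR z = vseq s2 c z0 x0 m /\ IZR z = wseq t c z1 y1 n /\
    ( (Nat.even m = true /\ Nat.even n = true /\ x0 = 2%Z /\ y1 = 2%Z /\
       Z.abs z0 = 2%Z /\ Z.abs z1 = 2%Z /\ (z0 * z1 > 0)%Z)
   \/ (Nat.odd m = true /\ Nat.odd n = true /\ x0 = r2 /\ y1 = r2 /\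
       Z.abs z0 = t /\ Z.abs z1 = s2 /\ (z0 * z1 > 0)%Z) ).

(* Main.v *)
Require Import Defs.
From Stdlib Require Import ZArith Reals Lia Lra Psatz.
Open Scope R_scope.

Open Scope R_scope.

Lemma rec2_aux_S P u0 u1 k :
  rec2_aux P u0 u1 (S k) = (snd (rec2_aux P u0 u1 k), P * snd (rec2_aux P u0 u1 k) - fst (rec2_aux P u0 u1 k)).
Proof. simpl. destruct (rec2_aux P u0 u1 k); reflexivity. Qed.

Lemma rec2_SS P u0 u1 k :
  rec2 P u0 u1 (S (S k)) = P * rec2 P u0 u1 (S k) - rec2 P u0 u1 k.
Proof. unfold rec2. rewrite !rec2_aux_S. simpl. reflexivity. Qed.

Lemma rec2_0 P u0 u1 : rec2 P u0 u1 0 = u0.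
Proof. reflexivity. Qed.
Lemma rec2_1 P u0 u1 : rec2 P u0 u1 1 = u1.
Proof. reflexivity. Qed.

Fixpoint zaux (P u0 u1 : Z) (k : nat) : Z * Z :=
  match k with
  | O => (u0, u1)
  | S k' => let (x, y) := zaux P u0 u1 k' in (y, (P * y - x)%Z)
  end.
Definition zs P u0 u1 k := fst (zaux P u0 u1 k).

Lemma zaux_S P u0 u1 k :
  zaux P u0 u1 (S k) = (snd (zaux P u0 u1 k), (P * snd (zaux P u0 u1 k) - fst (zaux P u0 u1 k))%Z).
Proof. simpl. destruct (zaux P u0 u1 k); reflexivity. Qed.

Lemma zs_0 P u0 u1 : zs P u0 u1 0 = u0.
Proof. reflexivity. Qed.
Lemma zs_1 P u0 u1 : zs P u0 u1 1 = u1.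
Proof. reflexivity. Qed.

Lemma zs_SS P u0 u1 k :
  zs P u0 u1 (S (S k)) = (P * zs P u0 u1 (S k) - zs P u0 u1 k)%Z.
Proof. unfold zs. rewrite !zaux_S. simpl. reflexivity. Qed.

Lemma two_step (f g : nat -> R) (P : R) :
  (forall k, f (S (S k)) = P * f (S k) - f k) ->
  (forall k, g (S (S k)) = P * g (S k) - g k) ->
  f 0%nat = g 0%nat -> f 1%nat = g 1%nat -> forall k, f k = g k.
Proof.
  intros Hf Hg H0 H1.
  assert (H: forall k, f k = g k /\ f (S k) = g (S k)).
  { induction k as [|k [IH1 IH2]]; [split; auto|].
    split; auto. rewrite Hf, Hg, IH1, IH2. reflexivity. }
  intro k; apply H.
Qed.

Lemma zs_IZR P u0 u1 k :
  IZR (zs P u0 u1 k) = rec2 (IZR P) (IZR u0) (IZR u1) k.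
Proof.
  revert k.
  apply (two_step (fun k => IZR (zs P u0 u1 k)) (fun k => rec2 (IZR P) (IZR u0) (IZR u1) k) (IZR P)).
  - intro k. rewrite zs_SS, minus_IZR, mult_IZR. reflexivity.
  - intro k. apply rec2_SS.
  - reflexivity.
  - reflexivity.
Qed.

Lemma rec2_scale P u0 u1 k :
  2 * rec2 P u0 u1 k = rec2 P (2*u0) (2*u1) k.
Proof.
  revert k.
  apply (two_step (fun k => 2 * rec2 P u0 u1 k) (fun k => rec2 P (2*u0) (2*u1) k) P).
  - intro k. rewrite rec2_SS. ring.
  - intro k. apply rec2_SS.
  - reflexivity.
  - reflexivity.
Qed.

Lemma vseq_zs s c z0 x0 k :
  2 * vseq s c z0 x0 k = IZR (zs s (2*z0) (s*z0 + c*x0) k).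
Proof.
  unfold vseq. rewrite rec2_scale, zs_IZR. f_equal.
  - rewrite mult_IZR. reflexivity.
  - rewrite plus_IZR, !mult_IZR. field.
Qed.

Lemma wseq_zs s c z0 x0 k :
  2 * wseq s c z0 x0 k = IZR (zs s (2*z0) (s*z0 + c*x0) k).
Proof. apply vseq_zs. Qed.

Open Scope Z_scope.

Lemma zs_4 P u0 u1 k :
  zs P u0 u1 (S (S (S (S k)))) = (P*P - 2) * zs P u0 u1 (S (S k)) - zs P u0 u1 k.
Proof.
  rewrite !zs_SS. ring.
Qed.

Lemma even_form (P a c z x : Z) (HP : P*P = a*c+4) :
  forall k : nat, exists q, zs P (2*z) (P*z + c*x) (2*k)%nat =
     2*z + c*(a*z*(Z.of_nat k)^2 + P*x*Z.of_nat k) + c^2*q.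
Proof.
  assert (H: forall k : nat,
    (exists q, zs P (2*z) (P*z + c*x) (2*k)%nat =
     2*z + c*(a*z*(Z.of_nat k)^2 + P*x*Z.of_nat k) + c^2*q) /\
    (exists q, zs P (2*z) (P*z + c*x) (2*(S k))%nat =
     2*z + c*(a*z*(Z.of_nat (S k))^2 + P*x*Z.of_nat (S k)) + c^2*q)).
  { induction k as [|k [[q0 H0] [q1 H1]]].
    - split; exists 0.
      + rewrite Nat.mul_0_r, zs_0. simpl Z.of_nat. ring.
      + replace (2 * 1)%nat with 2%nat by lia. rewrite zs_SS, zs_1, zs_0.
        replace (Z.of_nat 1) with 1 by reflexivity. rewrite !Z.mul_add_distr_l.
        replace (P*(P*z)) with ((P*P)*z) by ring. rewrite HP. ring.
    - split; [exists q1; exact H1|].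
      exists (a*(a*z*(Z.of_nat (S k))^2 + P*x*Z.of_nat (S k)) + a*c*q1 + 2*q1 - q0).
      replace (2 * S (S k))%nat with (S (S (S (S (2*k)))))%nat by lia.
      rewrite zs_4.
      replace (S (S (2*k)))%nat with (2 * S k)%nat by lia.
      rewrite H1, H0, HP. rewrite !Nat2Z.inj_succ. ring. }
  intro k; apply H.
Qed.

Fixpoint tri (k : nat) : Z := match k with O => 0 | S k' => tri k' + Z.of_nat (S k') end.

Lemma tri_S k : tri (S k) = tri k + Z.of_nat k + 1.
Proof. change (tri (S k)) with (tri k + Z.of_nat (S k)). rewrite Nat2Z.inj_succ. ring. Qed.

Lemma tri_spec k : 2 * tri k = Z.of_nat k * (Z.of_nat k + 1).
Proof. induction k; [reflexivity|]. rewrite tri_S, Nat2Z.inj_succ. nia. Qed.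

Lemma odd_form (P a c z x : Z) (HP : P*P = a*c+4) :
  forall k : nat, exists q, zs P (2*z) (P*z + c*x) (2*k+1)%nat =
     P*z + c*(x + a*P*z*tri k + 2*x*Z.of_nat k) + c^2*q.
Proof.
  assert (H: forall k : nat,
    (exists q, zs P (2*z) (P*z + c*x) (2*k+1)%nat =
     P*z + c*(x + a*P*z*tri k + 2*x*Z.of_nat k) + c^2*q) /\
    (exists q, zs P (2*z) (P*z + c*x) (2*(S k)+1)%nat =
     P*z + c*(x + a*P*z*tri (S k) + 2*x*Z.of_nat (S k)) + c^2*q)).
  { induction k as [|k [[q0 H0] [q1 H1]]].
    - split.
      + exists 0. rewrite Nat.mul_0_r. simpl plus. rewrite zs_1. simpl tri. simpl Z.of_nat. ring.
      + exists (a*x). replace (2 * 1 + 1)%nat with 3%nat by lia. rewrite !zs_SS, zs_1, zs_0. replace (Z.of_nat 1) with 1 by reflexivity.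
        rewrite !Z.mul_sub_distr_l, !Z.mul_add_distr_l.
        replace (P*(P*(P*z))) with (P*P*(P*z)) by ring. replace (P*(P*(c*x))) with (P*P*(c*x)) by ring.
        rewrite HP. simpl tri. ring.
    - split; [exists q1; exact H1|].
      exists (a*(x + a*P*z*tri (S k) + 2*x*Z.of_nat (S k)) + a*c*q1 + 2*q1 - q0).
      replace (2 * S (S k) + 1)%nat with (S (S (S (S (2*k+1)))))%nat by lia.
      rewrite zs_4.
      replace (S (S (2*k+1)))%nat with (2 * S k + 1)%nat by lia.
      rewrite H1, H0, HP. rewrite !tri_S, !Nat2Z.inj_succ. ring. }
  intro k; apply H.
Qed.

Open Scope R_scope.

Lemma grow_low (f : nat -> R) (P : R) :
  (forall k, f (S (S k)) = P * f (S k) - f k) -> 2 <= P -> 0 <= f 0%nat ->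
  (P - 1) * f 0%nat <= f 1%nat ->
  forall k, (P-1)^k * f 0%nat <= f k /\ 0 <= f k /\ (P-1) * f k <= f (S k).
Proof.
  intros Hr HP H0 H1. induction k as [|k [IH1 [IH2 IH3]]].
  - simpl. lra.
  - assert (0 <= f (S k)) by nra.
    split; [|split; auto].
    + simpl. assert (0 <= P - 1) by lra. nra.
    + rewrite Hr. nra.
Qed.

Lemma grow_up (f : nat -> R) (P Q : R) :
  (forall k, f (S (S k)) = P * f (S k) - f k) -> (forall k, 0 <= f k) -> P <= Q -> 0 <= Q ->
  f 1%nat <= Q * f 0%nat ->
  forall k, f k <= Q^k * f 0%nat /\ f (S k) <= Q * f k.
Proof.
  intros Hr Hpos HPQ HQ H1. induction k as [|k [IH1 IH2]].
  - simpl. lra.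
  - split.
    + simpl. pose proof (Hpos k). nra.
    + rewrite Hr. pose proof (Hpos k). pose proof (Hpos (S k)). nra.
Qed.

Lemma ln_le' x y : 0 < x -> x <= y -> ln x <= ln y.
Proof.
  intros Hx Hxy. destruct (Rle_lt_or_eq_dec _ _ Hxy) as [H|H].
  - left. apply ln_increasing; auto.
  - subst; lra.
Qed.

Lemma ln_bound x y : 0 < x -> 0 < y -> ln x <= ln y + (x - y) / y.
Proof.
  intros Hx Hy.
  replace x with (y * (x / y)) at 1 by (field; lra).
  rewrite ln_mult; [| lra | apply Rdiv_lt_0_compat; lra].
  pose proof (exp_ineq1_le (ln (x / y))) as H.
  rewrite exp_ln in H by (apply Rdiv_lt_0_compat; lra).
  replace ((x - y) / y) with (x / y - 1) by (field; lra). lra.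
Qed.

Lemma ln_ge10 x : 10000000000 <= x -> 10 <= ln x.
Proof.
  intro H.
  assert (E: exp 10 <= 10000000000).
  { replace 10 with (INR 10) by (simpl; ring).
    assert (H0: forall n, exp (INR n) = (exp 1)^n).
    { induction n.
      - simpl. apply exp_0.
      - rewrite S_INR, exp_plus, IHn. simpl. ring. }
    rewrite H0. pose proof exp_le_3. pose proof (exp_pos 1).
    apply Rle_trans with (3^10). apply pow_incr; lra. simpl; lra. }
  rewrite <- (ln_exp 10). apply ln_le'. apply exp_pos. lra.
Qed.

(* the logarithmic contradiction in the odd case *)
Lemma lnarg (a b c s t M N j : R) (Mn Nn : nat) :
  M = INR Mn -> N = INR Nn -> M = N + j -> 1 <= j -> j <= N -> 2 <= N ->
  0 < a -> 0 < c -> 1 < s -> 0 < t -> 0 < b ->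
  ((s-1)^2)^Mn <= ((t+1)^2)^Nn ->
  a * M * (M+1) >= b * (N*(N+1) - j) ->
  M * (a*c - (s-1)^2) <= (s-1)^2 / 2 ->
  N * ((t+1)^2 - b*c) <= b*c / 2 ->
  10000000000 <= a*c -> False.
Proof.
  intros HM HN Hj Hj1 HjN HN2 Ha Hc Hs Ht Hb H1 H4 HM1 HN1 Hac.
  assert (Hs1: 0 < (s-1)^2) by (apply pow_lt; lra).
  assert (Ht1: 0 < (t+1)^2) by (apply pow_lt; lra).
  assert (L1 : M * ln ((s-1)^2) <= N * ln ((t+1)^2)).
  { rewrite HM, HN, <- !ln_pow by auto. apply ln_le'; auto. apply pow_lt; auto. }
  assert (L2 : M * ln (a*c) <= M * ln ((s-1)^2) + 1/2).
  { pose proof (ln_bound (a*c) ((s-1)^2) ltac:(nra) Hs1) as B.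
    set (e := (a*c - (s-1)^2) / (s-1)^2) in B.
    assert (E: e * (s-1)^2 = a*c - (s-1)^2) by (unfold e; field; lra).
    assert (M * e <= 1/2) by nra.
    assert (0 <= M) by lra. nra. }
  assert (L3 : N * ln ((t+1)^2) <= N * ln (b*c) + 1/2).
  { pose proof (ln_bound ((t+1)^2) (b*c) Ht1 ltac:(nra)) as B.
    set (e := ((t+1)^2 - b*c) / (b*c)) in B.
    assert (E: e * (b*c) = (t+1)^2 - b*c) by (unfold e; field; split; lra).
    assert (Hbc: 0 < b*c) by nra.
    assert (N * e <= 1/2).
    { apply Rmult_le_reg_r with (b*c); auto.
      replace (N*e*(b*c)) with (N*(e*(b*c))) by ring. rewrite E. lra. }
    assert (0 <= N) by lra. nra. }
  remember (N*(N+1) - j) as K eqn:HKd.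
  assert (HK : N*N <= K) by nra.
  assert (HK0 : 0 < K) by nra.
  assert (L4 : ln b <= ln a + (M*(M+1) - K)/K).
  { assert (ln b + ln K <= ln a + ln (M*(M+1))).
    { assert (0 < M*(M+1)) by nra.
      rewrite <- (ln_mult b K), <- (ln_mult a (M*(M+1))); try lra.
      apply ln_le'; nra. }
    assert (0 < M*(M+1)) by nra. pose proof (ln_bound (M*(M+1)) K ltac:(lra) HK0). lra. }
  set (e3 := (M*(M+1) - K)/K) in L4.
  assert (E3 : e3 * K = M*(M+1) - K) by (unfold e3; field; lra).
  assert (Ne3 : N * e3 <= 8 * j).
  { assert (N * e3 * K <= 8 * j * K).
    { replace (N*e3*K) with (N*(e3*K)) by ring. rewrite E3. rewrite HKd, Hj.
      assert (N*(2*N+j+2) <= 8*(N*(N+1)-j)) by nra.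
      assert (0 <= j) by lra.
      replace (N * ((N + j) * (N + j + 1) - (N * (N + 1) - j))) with (j * (N*(2*N+j+2))) by ring.
      replace (8 * j * (N * (N + 1) - j)) with (j * (8*(N*(N+1)-j))) by ring.
      apply Rmult_le_compat_l; auto. }
    nra. }
  rewrite !ln_mult in L2, L3 by nra.
  pose proof (ln_ge10 _ Hac) as L5. rewrite ln_mult in L5 by nra.
  nra.
Qed.

Open Scope Z_scope.

Lemma even_arith (a b c s t e m n q : Z)
  (Ha: 2 <= a) (Hab: a < b) (Hb: 100000 < b) (Hcb : 1000000000 * b < c)
  (Hs: 0 < s) (Ht: 0 < t) (Hs2: s*s = a*c+4) (Ht2: t*t = b*c+4) (He: e*e = 1)
  (Hm: 0 <= m) (Hn: 2 <= n) (Hmn: m <= 2*n)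
  (HY: 2*(e*(a*m*m - b*n*n) + s*m - t*n) = c*q)
  (Hsmall: 4000000000000 * (b*n*n) <= 115691137956 * c) : False.
Proof.
  assert (Hc: 0 < c) by lia.
  assert (Hmm: m*m <= 4*(n*n)) by (timeout 10 nia).
  assert (Hmm0: 0 <= m*m) by (timeout 10 nia).
  assert (F1: a*m*m <= 4*(b*n*n)).
  { assert (a*(m*m) <= b*(m*m)) by (apply Z.mul_le_mono_nonneg_r; lia).
    assert (b*(m*m) <= b*(4*(n*n))) by (apply Z.mul_le_mono_nonneg_l; lia).
    lia. }
  assert (F4: 10000*(b*n*n) <= 290*c) by lia.
  assert (Hsm0: 0 <= s*m) by (timeout 10 nia).
  assert (Htn0: 0 <= t*n) by (timeout 10 nia).
  assert (F2: 10000 * (s*m) <= 3402 * c).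
  { assert (E: (s*m)*(s*m) <= 4*c*(b*n*n)).
    { replace ((s*m)*(s*m)) with ((s*s)*(m*m)) by ring. rewrite Hs2.
      assert (a*c+4 <= b*c) by (timeout 10 nia). assert (m*m <= 4*(n*n)) by (timeout 10 nia).
      assert (0 <= m*m) by (timeout 10 nia). (timeout 10 nia). }
    assert (100000000*((s*m)*(s*m)) < 11573604*(c*c)) by (timeout 10 nia).
    (timeout 10 nia). }
  assert (F3: 10000 * (t*n) <= 1710 * c).
  { assert (E: (t*n)*(t*n) = c*(b*n*n) + 4*(n*n)).
    { replace ((t*n)*(t*n)) with ((t*t)*(n*n)) by ring. rewrite Ht2. ring. }
    assert (n*n <= b*n*n) by (timeout 10 nia).
    assert (100000000*((t*n)*(t*n)) < 2924100*(c*c)) by (timeout 10 nia).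
    (timeout 10 nia). }
  assert (Hb0: 0 <= b*n*n) by (timeout 10 nia).
  assert (Ha0: 0 <= a*m*m) by (timeout 10 nia).
  assert (HYb: -c < c*q < c).
  { rewrite <- HY. destruct (Z.eq_dec e 1) as [->|Hne].
    - lia.
    - assert (e = -1) by (timeout 10 nia). subst e. lia. }
  assert (q = 0) by (timeout 10 nia). subst q.
  set (D := b*n*n - a*m*m).
  assert (Hid: D*(c + 2*e*s*m - D) = 4*(m*m) - 4*(n*n)).
  { assert (Et: t*n = s*m + e*(a*m*m - b*n*n)) by lia.
    assert (E2: (t*n)*(t*n) = (s*m + e*(a*m*m - b*n*n))*(s*m + e*(a*m*m - b*n*n))) by (rewrite <- Et; ring).
    replace ((t*n)*(t*n)) with ((t*t)*(n*n)) in E2 by ring.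
    replace ((s*m + e*(a*m*m - b*n*n))*(s*m + e*(a*m*m - b*n*n))) with
      ((s*s)*(m*m) + 2*e*(s*m)*(a*m*m - b*n*n) + (e*e)*((a*m*m - b*n*n)*(a*m*m - b*n*n))) in E2 by ring.
    rewrite Ht2, Hs2, He in E2. unfold D. (timeout 10 nia). }
  assert (HQ: 2000*c < 10000*(c + 2*e*s*m - D)).
  { unfold D. destruct (Z.eq_dec e 1) as [->|Hne].
    - lia.
    - assert (e = -1) by (timeout 10 nia). subst e. lia. }
  assert (Hmn2: 4*(m*m) - 4*(n*n) <= 16*(n*n) /\ -(16*(n*n)) <= 4*(m*m) - 4*(n*n)) by (timeout 10 nia).
  assert (Hn2: 10000*(16*(n*n)) < 2000*c) by (timeout 10 nia).
  destruct (Z.eq_dec D 0) as [HD|HD].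
  - rewrite HD in Hid. assert (m*m = n*n) by lia.
    assert (m = n).
    { destruct (Z.lt_total m n) as [H1|[H1|H1]]; auto.
      - pose proof (Z.square_lt_mono_nonneg m n Hm H1). lia.
      - pose proof (Z.square_lt_mono_nonneg n m ltac:(lia) H1). lia. }
    subst m. unfold D in HD.
    assert ((b-a)*(n*n) = b*n*n - a*n*n) by ring.
    assert ((b-a)*(n*n) = 0) by lia.
    apply Z.mul_eq_0 in H1. destruct H1; lia.
  - destruct (Z_lt_ge_dec D 0) as [HD1|HD1].
    + remember (c + 2*e*s*m - D) as Q.
      assert ((D+1)*Q <= 0) by (apply Z.mul_nonpos_nonneg; lia).
      assert ((D+1)*Q = D*Q + Q) by ring. lia.
    + remember (c + 2*e*s*m - D) as Q.
      assert (0 <= (D-1)*Q) by (apply Z.mul_nonneg_nonneg; lia).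
      assert ((D-1)*Q = D*Q - Q) by ring. lia.
Qed.

Open Scope Z_scope.

Lemma tm_bound m n TM : 0 <= m -> 2 <= n -> m <= 2*n -> 2*TM = m*(m+1) -> 0 <= TM <= 3*(n*n).
Proof.
  intros. assert (m*(m+1) <= (2*n)*(2*n+1)) by (apply Z.mul_le_mono_nonneg; lia).
  assert (0 <= m*(m+1)) by (apply Z.mul_nonneg_nonneg; lia). nia.
Qed.

Lemma tn_bound n TN : 2 <= n -> 2*TN = n*(n+1) -> 3 <= TN <= n*n.
Proof. intros. nia. Qed.

Lemma n4_bound n b : 2 <= n -> 16*((b*(n*n))*(b*(n*n))) <= (2*n+1)*(2*n+1)*((2*n+1)*(2*n+1)) * (b*b).
Proof.
  intros. assert (0 <= 2*n) by lia.
  assert (16*(n*n*(n*n)) <= (2*n+1)*(2*n+1)*((2*n+1)*(2*n+1))).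
  { assert ((2*n)*(2*n) <= (2*n+1)*(2*n+1)) by (apply Z.mul_le_mono_nonneg; lia).
    assert (0 <= (2*n)*(2*n)) by lia.
    assert ((2*n)*(2*n)*((2*n)*(2*n)) <= (2*n+1)*(2*n+1)*((2*n+1)*(2*n+1))) by (apply Z.mul_le_mono_nonneg; lia).
    lia. }
  assert (0 <= b*b) by nia.
  assert (16*(n*n*(n*n))*(b*b) <= (2*n+1)*(2*n+1)*((2*n+1)*(2*n+1))*(b*b)) by (apply Z.mul_le_mono_nonneg_r; lia).
  lia.
Qed.

Lemma sq_le D K : -K <= D <= K -> D*D <= K*K.
Proof. intros. nia. Qed.

Lemma cq0 c q : 0 < c -> -c < c*q < c -> q = 0.
Proof. intros. nia. Qed.

Lemma tri_gap m n TM TN : 0 <= m -> m < n -> 2*TM = m*(m+1) -> 2*TN = n*(n+1) -> n <= TN - TM.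
Proof.
  intros. assert (m*(m+1) <= (n-1)*n) by (apply Z.mul_le_mono_nonneg; lia). nia.
Qed.

Lemma odd_arith (a b c r s t e m n q TM TN : Z)
  (Ha: 2 <= a) (Hab: a < b) (Hb: 100000 < b) (Hcb : 1000000000 * b < c)
  (Hs: 0 < s) (Ht: 0 < t) (Hr: 0 < r) (Hs2: s*s = a*c+4) (Ht2: t*t = b*c+4) (Hr2: r*r = a*b+4)
  (He: e*e = 1)
  (Hm: 0 <= m) (Hn: 2 <= n) (Hmn: m <= 2*n)
  (HTM: 2*TM = m*(m+1)) (HTN: 2*TN = n*(n+1))
  (HX: e*s*t*(a*TM - b*TN) + 2*r*(m-n) = c*q)
  (Hsmall: 100000000000000000000 * ((2*n+1)*(2*n+1)*((2*n+1)*(2*n+1))) * (b*b) <= 7245257099093776 * c) :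
  n < m /\ a*m*(m+1) >= b*(n*(n+1) - (m-n)).
Proof.
  assert (Hc: 0 < c) by lia.
  set (D := a*TM - b*TN) in *.
  set (j := m - n) in *.
  assert (Hq': exists q', 16*(D*D) - 4*(r*r)*(j*j) = c*q').
  { exists (q*(e*s*t*D - 2*r*j) - (a*b*c + 4*a + 4*b)*(D*D)).
    assert (E: (e*s*t*D + 2*r*j)*(e*s*t*D - 2*r*j) = (e*e)*(s*s)*(t*t)*(D*D) - 4*(r*r)*(j*j)) by ring.
    rewrite HX, He, Hs2, Ht2 in E. lia. }
  destruct Hq' as [q' Hq'].
  destruct (tm_bound m n TM Hm Hn Hmn HTM) as [HTM0 HTMb].
  destruct (tn_bound n TN Hn HTN) as [HTN0 HTNb].
  assert (Hnn: 0 <= n*n) by lia.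
  assert (HaTM: 0 <= a*TM <= 3*(b*(n*n))).
  { split. apply Z.mul_nonneg_nonneg; lia.
    assert (a*TM <= b*TM) by (apply Z.mul_le_mono_nonneg_r; lia).
    assert (b*TM <= b*(3*(n*n))) by (apply Z.mul_le_mono_nonneg_l; lia). lia. }
  assert (HbTN: 0 <= b*TN <= b*(n*n)).
  { split. apply Z.mul_nonneg_nonneg; lia. apply Z.mul_le_mono_nonneg_l; lia. }
  assert (HDb: -(3*(b*(n*n))) <= D <= 3*(b*(n*n))) by (unfold D; lia).
  set (X := b*(n*n)) in *.
  assert (HX0: 0 <= X) by (unfold X; apply Z.mul_nonneg_nonneg; lia).
  assert (HD2: D*D <= 9*(X*X)) by (pose proof (sq_le D (3*X) ltac:(lia)); lia).
  assert (Hn4: 16*(X*X) <= (2*n+1)*(2*n+1)*((2*n+1)*(2*n+1)) * (b*b)) by (apply n4_bound; lia).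
  assert (HXX: 100000000000000000000 * (16*(X*X)) <= 7245257099093776 * c).
  { lia. }
  assert (Hrb: r < b).
  { destruct (Z_lt_ge_dec r b); auto. assert (b*b <= r*r) by (apply Z.square_le_mono_nonneg; lia).
    assert (a*b <= (b-1)*b) by (apply Z.mul_le_mono_nonneg_r; lia). lia. }
  assert (Hj: -n <= j <= n) by (unfold j; lia).
  assert (Hjj: j*j <= n*n) by (apply sq_le; lia).
  assert (Hrr: r*r <= b*b) by (apply Z.square_le_mono_nonneg; lia).
  assert (Hj2: 0 <= j*j) by (apply Z.square_nonneg).
  assert (Hrj: r*r*(j*j) <= X*X).
  { assert (r*r*(j*j) <= b*b*(n*n)) by (apply Z.mul_le_mono_nonneg; lia).
    assert (b*b*(n*n) <= b*b*(n*n)*(n*n)).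
    { assert (0 <= b*b*(n*n)) by (apply Z.mul_nonneg_nonneg; lia).
      assert (b*b*(n*n)*1 <= b*b*(n*n)*(n*n)) by (apply Z.mul_le_mono_nonneg_l; lia). lia. }
    assert (X*X = b*b*(n*n)*(n*n)) by (unfold X; ring). lia. }
  assert (q' = 0).
  { assert (0 <= D*D) by (apply Z.square_nonneg). assert (0 <= r*r*(j*j)) by (apply Z.mul_nonneg_nonneg; lia).
    apply (cq0 c); lia. }
  subst q'. rewrite Z.mul_0_r in Hq'.
  assert (E4: 4*(D*D) = (r*j)*(r*j)) by lia.
  destruct (Z_lt_ge_dec j 0) as [Hj0|Hj0].
  - exfalso.
    assert (HTT: n <= TN - TM) by (apply (tri_gap m n); unfold j in *; lia).
    assert (b*n <= -D).
    { assert (a*TM <= b*TM) by (apply Z.mul_le_mono_nonneg_r; lia).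
      assert (b*n <= b*(TN-TM)) by (apply Z.mul_le_mono_nonneg_l; lia). unfold D. lia. }
    assert (0 < b*n) by (apply Z.mul_pos_pos; lia).
    assert ((b*n)*(b*n) <= (-D)*(-D)) by (apply Z.square_le_mono_nonneg; lia).
    assert ((r*j)*(r*j) <= (r*n)*(r*n)).
    { replace ((r*j)*(r*j)) with (r*r*(j*j)) by ring. replace ((r*n)*(r*n)) with (r*r*(n*n)) by ring.
      apply Z.mul_le_mono_nonneg_l; lia. }
    assert ((r*n)*(r*n) < (b*n)*(b*n)).
    { apply Z.square_lt_mono_nonneg. apply Z.mul_nonneg_nonneg; lia. apply Z.mul_lt_mono_pos_r; lia. }
    replace ((-D)*(-D)) with (D*D) in * by ring.
    lia.
  - destruct (Z.eq_dec j 0) as [Hj1|Hj1].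
    + exfalso. rewrite Hj1 in E4. assert (D = 0).
      { assert (D*D = 0) by lia. apply Z.mul_eq_0 in H. lia. }
      assert (m = n) by (unfold j in Hj1; lia). subst m.
      assert (TM = TN) by lia. unfold D in H. rewrite H0 in H.
      assert ((a-b)*TN = 0) by lia. apply Z.mul_eq_0 in H1. lia.
    + split; [unfold j in *; lia|].
      assert (2*D >= -(r*j)).
      { destruct (Z_lt_ge_dec (2*D) (-(r*j))); [|lia].
        assert (0 <= r*j) by (apply Z.mul_nonneg_nonneg; lia).
        pose proof (Z.square_lt_mono_nonneg (r*j) (-(2*D)) ltac:(lia) ltac:(lia)).
        replace (-(2*D)*(-(2*D))) with (4*(D*D)) in H by ring. lia. }
      assert (r*j <= b*j) by (apply Z.mul_le_mono_nonneg_r; lia).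
      unfold D in H. unfold j in *.
      assert (a*m*(m+1) = a*(2*TM)) by (rewrite HTM; ring).
      assert (b*(n*(n+1)) = b*(2*TN)) by (rewrite HTN; ring).
      lia.
Qed.

Open Scope R_scope.

Ltac toR H :=
  first [ apply IZR_le in H | apply IZR_lt in H | apply (f_equal IZR) in H ];
  rewrite ?plus_IZR, ?mult_IZR, ?minus_IZR, ?opp_IZR in H.

Lemma vseq_rec s c z0 x0 k :
  vseq s c z0 x0 (S (S k)) = IZR s * vseq s c z0 x0 (S k) - vseq s c z0 x0 k.
Proof. apply rec2_SS. Qed.

Lemma even_growth (s t c e : Z) (M N : nat)
  (Hs3: (3 <= s)%Z) (Hst: (s < t)%Z) (Hts: (t + 1 <= (s-1)*(s-1))%Z) (Hcs: (2*t + 2 <= c)%Z)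
  (He: e = 1%Z \/ e = (-1)%Z) (HN: (1 <= N)%nat)
  (Heq: vseq s c (2*e) 2 (2*M) = vseq t c (2*e) 2 (2*N)) : (M <= 2*N)%nat.
Proof.
  destruct (le_lt_dec M (2*N)) as [H|H]; auto. exfalso.
  destruct M as [|M1]; [lia|]. destruct N as [|N1]; [lia|].
  replace (2 * S M1)%nat with (S (2*M1+1)) in Heq by lia.
  replace (2 * S N1)%nat with (S (2*N1+1)) in Heq by lia.
  set (f := fun k => vseq s c (2*e) 2 (S k)).
  set (g := fun k => vseq t c (2*e) 2 (S k)).
  assert (Ef: forall k, f (S (S k)) = IZR s * f (S k) - f k) by (intro; unfold f; apply vseq_rec).
  assert (Eg: forall k, g (S (S k)) = IZR t * g (S k) - g k) by (intro; unfold g; apply vseq_rec).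
  assert (E: IZR e = 1 \/ IZR e = -1) by (destruct He; subst; [left|right]; reflexivity).
  assert (Hv0: vseq s c (2*e) 2 0 = 2 * IZR e) by (unfold vseq; rewrite rec2_0, mult_IZR; reflexivity).
  assert (Hw0: vseq t c (2*e) 2 0 = 2 * IZR e) by (unfold vseq; rewrite rec2_0, mult_IZR; reflexivity).
  assert (Hf0: f 0%nat = IZR s * IZR e + IZR c).
  { unfold f, vseq. rewrite rec2_1, mult_IZR. field. }
  assert (Hg0: g 0%nat = IZR t * IZR e + IZR c).
  { unfold g, vseq. rewrite rec2_1, mult_IZR. field. }
  assert (Hf1: f 1%nat = IZR s * f 0%nat - 2 * IZR e) by (unfold f; rewrite vseq_rec, <- Hv0; reflexivity).
  assert (Hg1: g 1%nat = IZR t * g 0%nat - 2 * IZR e) by (unfold g; rewrite vseq_rec, <- Hw0; reflexivity).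
  toR Hs3. toR Hst. toR Hts. toR Hcs.
  assert (Hf0p: IZR c - IZR s <= f 0%nat) by (rewrite Hf0; destruct E as [-> | ->]; lra).
  assert (Hg0p: g 0%nat <= IZR c + IZR t) by (rewrite Hg0; destruct E as [-> | ->]; lra).
  assert (Hg0q: IZR c - IZR t <= g 0%nat) by (rewrite Hg0; destruct E as [-> | ->]; lra).
  pose proof (grow_low f (IZR s) Ef ltac:(lra) ltac:(lra) ltac:(rewrite Hf1; destruct E as [-> | ->]; nra)) as GL.
  pose proof (grow_low g (IZR t) Eg ltac:(lra) ltac:(lra) ltac:(rewrite Hg1; destruct E as [-> | ->]; nra)) as GLw.
  assert (gpos: forall k, 0 <= g k) by (intro k; apply (GLw k)).
  pose proof (grow_up g (IZR t) (IZR t + 1) Eg gpos ltac:(lra) ltac:(lra) ltac:(rewrite Hg1; destruct E as [-> | ->]; nra)) as GU.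
  destruct (GL (2*M1+1)%nat) as [L1 _].
  destruct (GU (2*N1+1)%nat) as [U1 _].
  change (f (2*M1+1)%nat = g (2*N1+1)%nat) in Heq.
  remember (IZR s - 1) as x eqn:Hx. remember (IZR t + 1) as y eqn:Hy.
  assert (P1: x^(2*(2*N1+2)+1) <= x^(2*M1+1)) by (apply Rle_pow; [lra | lia]).
  rewrite pow_add, pow_mult in P1.
  assert (P2: y^(2*N1+2) <= (x^2)^(2*N1+2)) by (apply pow_incr; split; [lra | simpl; lra]).
  replace (2*N1+2)%nat with (S (2*N1+1)) in P1, P2 by lia. rewrite <- tech_pow_Rmult in P2.
  assert (Py: 0 < y^(2*N1+1)) by (apply pow_lt; lra).
  remember (y^(2*N1+1)) as Y eqn:HY. remember ((x^2)^(S (2*N1+1))) as X eqn:HX.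
  assert (Y * (y * x * f 0%nat) <= Y * g 0%nat).
  { assert (X * x^1 * f 0%nat <= x^(2*M1+1) * f 0%nat) by (apply Rmult_le_compat_r; lra).
    assert (y * Y * x * f 0%nat <= X * x * f 0%nat).
    { apply Rmult_le_compat_r; [lra|]. apply Rmult_le_compat_r; lra. }
    replace (x^1) with x in * by ring. lra. }
  assert (y * x * f 0%nat <= g 0%nat) by (apply Rmult_le_reg_l with Y; lra).
  assert (F1: IZR c / 2 <= f 0%nat) by lra.
  assert (F2: IZR c <= x * f 0%nat) by (apply Rle_trans with (2 * (IZR c / 2)); [lra | apply Rmult_le_compat; lra]).
  assert (F3: y * IZR c <= y * (x * f 0%nat)) by (apply Rmult_le_compat_l; lra).
  assert (F4: y * IZR c = IZR t * IZR c + IZR c) by (rewrite Hy; ring).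
  assert (IZR t < IZR t * IZR c) by (rewrite <- (Rmult_1_r (IZR t)) at 1; apply Rmult_lt_compat_l; lra).
  rewrite Rmult_assoc in *. lra.
Qed.

Lemma odd_growth (s t c r e : Z) (M N : nat)
  (Hs3: (3 <= s)%Z) (Hst: (s < t)%Z) (Hts: (t + 1 <= (s-1)*(s-1))%Z)
  (He: e = 1%Z \/ e = (-1)%Z)
  (Hh1: (2*s <= s*(e*t) + c*r)%Z) (Hh2: (2*(e*t) <= s*(e*t) + c*r)%Z)
  (Heq: vseq s c (e*t) r (2*M+1) = vseq t c (e*s) r (2*N+1)) :
  (IZR s - 1)^(2*M) <= (IZR t + 1)^(2*N) /\ (M <= 2*N)%nat.
Proof.
  replace (2*M+1)%nat with (S (2*M)) in Heq by lia.
  replace (2*N+1)%nat with (S (2*N)) in Heq by lia.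
  set (f := fun k => vseq s c (e*t) r (S k)) in *.
  set (g := fun k => vseq t c (e*s) r (S k)) in *.
  assert (Ef: forall k, f (S (S k)) = IZR s * f (S k) - f k) by (intro; unfold f; apply vseq_rec).
  assert (Eg: forall k, g (S (S k)) = IZR t * g (S k) - g k) by (intro; unfold g; apply vseq_rec).
  assert (E: IZR e = 1 \/ IZR e = -1) by (destruct He; subst; [left|right]; reflexivity).
  assert (Hv0: vseq s c (e*t) r 0 = IZR e * IZR t) by (unfold vseq; rewrite rec2_0, mult_IZR; reflexivity).
  assert (Hw0: vseq t c (e*s) r 0 = IZR e * IZR s) by (unfold vseq; rewrite rec2_0, mult_IZR; reflexivity).
  remember ((IZR s * (IZR e * IZR t) + IZR c * IZR r) / 2) as h eqn:Hh.
  assert (Hf0: f 0%nat = h).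
  { unfold f, vseq. rewrite rec2_1, mult_IZR, Hh. reflexivity. }
  assert (Hg0: g 0%nat = h).
  { unfold g, vseq. rewrite rec2_1, !mult_IZR, Hh. field. }
  assert (Hf1: f 1%nat = IZR s * h - IZR e * IZR t) by (unfold f; rewrite vseq_rec, Hv0, <- Hf0; reflexivity).
  assert (Hg1: g 1%nat = IZR t * h - IZR e * IZR s) by (unfold g; rewrite vseq_rec, Hw0, <- Hg0; reflexivity).
  toR Hs3. toR Hst. toR Hts. toR Hh1. toR Hh2.
  assert (Hhs: IZR s <= h) by lra.
  assert (Hhe: IZR e * IZR t <= h) by lra.
  assert (Hes: IZR e * IZR s <= IZR s /\ - (IZR e * IZR s) <= IZR s) by (destruct E as [-> | ->]; lra).
  pose proof (grow_low f (IZR s) Ef ltac:(lra) ltac:(lra) ltac:(rewrite Hf1, Hf0; nra)) as GL.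
  pose proof (grow_low g (IZR t) Eg ltac:(lra) ltac:(lra) ltac:(rewrite Hg1, Hg0; nra)) as GLw.
  assert (gpos: forall k, 0 <= g k) by (intro k; apply (GLw k)).
  pose proof (grow_up g (IZR t) (IZR t + 1) Eg gpos ltac:(lra) ltac:(lra) ltac:(rewrite Hg1, Hg0; nra)) as GU.
  destruct (GL (2*M)%nat) as [L1 _].
  destruct (GU (2*N)%nat) as [U1 _].
  rewrite Hf0 in L1. rewrite Hg0 in U1.
  remember (IZR s - 1) as x eqn:Hx. remember (IZR t + 1) as y eqn:Hy.
  assert (Hxy: x^(2*M) <= y^(2*N)).
  { apply Rmult_le_reg_r with h; [lra|]. unfold f in L1; unfold g in U1. rewrite Heq in L1. lra. }
  split; auto.
  destruct (le_lt_dec M (2*N)) as [H|H]; auto. exfalso.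
  rewrite pow_mult in Hxy.
  assert (P1: y^M <= (x^2)^M) by (apply pow_incr; split; [lra | simpl; lra]).
  assert (P2: y^(S (2*N)) <= y^M) by (apply Rle_pow; [lra | lia]).
  assert (P3: 0 < y^(2*N)) by (apply pow_lt; lra).
  rewrite <- tech_pow_Rmult in P2.
  remember (y^(2*N)) as Y.
  assert (Y < y * Y) by (rewrite <- (Rmult_1_l Y) at 1; apply Rmult_lt_compat_r; lra).
  lra.
Qed.

Open Scope Z_scope.

Lemma basic_facts a b c s t :
  2 <= a -> a < b -> 100000 < b -> 56*(b*b*b) < 100*c -> 0 < s -> 0 < t ->
  s*s = a*c+4 -> t*t = b*c+4 ->
  1000000000*b < c /\ s < t /\ 3 <= s /\ 10000*t < c /\ t + 1 <= (s-1)*(s-1).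
Proof.
  intros Ha Hab Hb Hc Hs Ht Hs2 Ht2.
  assert (Hbb: 10000000000 <= b*b) by nia.
  assert (Hcb: 1000000000*b < c).
  { assert (10000000000*b <= b*b*b) by (apply Z.mul_le_mono_nonneg_r; lia). lia. }
  assert (Hst: s < t).
  { destruct (Z_lt_ge_dec s t); auto.
    assert (t*t <= s*s) by (apply Z.square_le_mono_nonneg; lia).
    assert (a*c < b*c) by (apply Z.mul_lt_mono_pos_r; lia). lia. }
  assert (Hac: 2*c <= a*c) by (apply Z.mul_le_mono_nonneg_r; lia).
  assert (Hs3: 3 <= s).
  { destruct (Z_lt_ge_dec s 3); [|lia]. assert (s*s <= 2*2) by (apply Z.square_le_mono_nonneg; lia). lia. }
  assert (Ht4: 10000*t < c).
  { apply Z.square_lt_simpl_nonneg; [lia|].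
    assert (1000000000*b*c < c*c) by (apply Z.mul_lt_mono_pos_r; lia).
    assert (100000*c <= b*c) by (apply Z.mul_le_mono_nonneg_r; lia).
    replace (10000*t*(10000*t)) with (100000000*(t*t)) by ring. lia. }
  repeat split; auto.
  replace ((s-1)*(s-1)) with (s*s - 2*s + 1) by ring. lia.
Qed.

Lemma h_fact a b c r s t :
  2 <= a -> a < b -> 100000 < b -> 1000000000*b < c -> a*a*(b*b) < 1000*c ->
  0 < s -> 0 < t -> 0 < r -> s < t -> 10000*t < c ->
  s*s = a*c+4 -> t*t = b*c+4 -> r*r = a*b+4 ->
  s*(t+2) <= c*r.
Proof.
  intros Ha Hab Hb Hcb Hc2 Hs Ht Hr Hst Ht4 Hs2 Ht2 Hr2.
  apply Z.square_le_simpl_nonneg; [nia|].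
  assert (Hat: 10*(a*t) <= c).
  { apply Z.square_le_simpl_nonneg; [lia|].
    replace (10*(a*t)*(10*(a*t))) with (100*(a*a)*(t*t)) by ring. rewrite Ht2.
    assert (100000*(a*a*b) <= a*a*(b*b)).
    { replace (a*a*(b*b)) with ((a*a*b)*b) by ring. assert (0 <= a*a*b) by nia.
      replace (100000*(a*a*b)) with ((a*a*b)*100000) by ring.
      apply Z.mul_le_mono_nonneg_l; lia. }
    assert (100*(a*a*b) < c) by lia.
    assert (100*(a*a*b)*c < c*c) by (apply Z.mul_lt_mono_pos_r; lia).
    assert (a*a <= a*a*b) by nia.
    nia. }
  assert (Hac: a*c*1000 <= c*c).
  { assert (1000*a <= c) by nia. nia. }
  replace (c*r*(c*r)) with (c*c*(r*r)) by ring.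
  replace (s*(t+2)*(s*(t+2))) with (s*s*(t*t + 4*t + 4)) by ring.
  rewrite Hs2, Ht2, Hr2.
  assert (a*c*t*10 <= c*c) by nia.
  assert (b*c*10000 <= c*c) by nia.
  nia.
Qed.

Lemma odd_small a b c s t m n :
  0 <= m -> m <= 2*n -> 2 <= n -> 3 <= s -> 0 < t -> 2 <= a -> 100000 < b -> 1000000000*b < c ->
  s*s = a*c+4 -> t*t = b*c+4 ->
  100000000000000000000 * ((2*n+1)*(2*n+1)*((2*n+1)*(2*n+1))) * (b*b) <= 7245257099093776 * c ->
  2*m*(2*s-5) <= (s-1)*(s-1) /\ 2*n*(5+2*t) <= b*c.
Proof.
  intros Hm Hmn Hn Hs Ht Ha Hb Hcb Hs2 Ht2 Hsm.
  assert (H1: n*n*(n*n) <= (2*n+1)*(2*n+1)*((2*n+1)*(2*n+1))).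
  { assert (n*n <= (2*n+1)*(2*n+1)) by (apply Z.mul_le_mono_nonneg; lia).
    apply Z.mul_le_mono_nonneg; lia. }
  assert (H2: 1*1 <= b*b) by (apply Z.mul_le_mono_nonneg; lia).
  assert (HP4: 0 <= (2*n+1)*(2*n+1)*((2*n+1)*(2*n+1))) by (apply Z.mul_nonneg_nonneg; apply Z.square_nonneg).
  remember ((2*n+1)*(2*n+1)*((2*n+1)*(2*n+1))) as P4.
  assert (H3: P4*1 <= P4*(b*b)) by (apply Z.mul_le_mono_nonneg_l; lia).
  assert (H4: 10000*(n*n) <= c).
  { assert (n*n*1 <= n*n*(n*n)) by (apply Z.mul_le_mono_nonneg_l; [apply Z.square_nonneg| nia]). lia. }
  assert (H5: 16*n <= s).
  { apply Z.square_le_simpl_nonneg; [lia|].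
    assert (2*c <= a*c) by (apply Z.mul_le_mono_nonneg_r; lia). lia. }
  split.
  - assert (2*m*(2*s-5) <= 4*n*(2*s)) by (apply Z.mul_le_mono_nonneg; lia).
    assert (16*n*s <= s*s) by (apply Z.mul_le_mono_nonneg_r; lia).
    assert (4*s <= s*s) by (apply Z.mul_le_mono_nonneg_r; lia).
    replace ((s-1)*(s-1)) with (s*s - 2*s + 1) by ring.
    replace (4*n*(2*s)) with (8*(n*s)) in * by ring.
    replace (16*n*s) with (16*(n*s)) in * by ring. lia.
  - assert (Hbc: 72*(n*n) <= b*c) by nia.
    assert (H6: 6*(n*t) <= b*c).
    { apply Z.square_le_simpl_nonneg; [nia|].
      replace (6*(n*t)*(6*(n*t))) with (36*(n*n)*(t*t)) by ring. rewrite Ht2.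
      assert (4 <= b*c) by nia.
      remember (b*c) as X.
      assert (0 <= n*n) by apply Z.square_nonneg.
      assert (36*(n*n)*(X+4) <= 36*(n*n)*(2*X)) by (apply Z.mul_le_mono_nonneg_l; lia).
      assert (72*(n*n)*X <= X*X) by (apply Z.mul_le_mono_nonneg_r; lia). lia. }
    assert (5 <= t).
    { destruct (Z_lt_ge_dec t 5); [|lia]. assert (t*t <= 4*4) by (apply Z.square_le_mono_nonneg; lia). nia. }
    assert (n*5 <= n*t) by (apply Z.mul_le_mono_nonneg_l; lia). lia.
Qed.

Open Scope R_scope.

Lemma small_even (n : nat) (b c : Z) : (0 < b)%Z -> (0 < c)%Z ->
  INR n <= (340134 / 1000000) * / sqrt (IZR b) * sqrt (IZR c) ->
  (1000000000000 * (Z.of_nat n * Z.of_nat n) * b <= 115691137956 * c)%Z.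
Proof.
  intros Hb Hc Hle. apply IZR_lt in Hb. apply IZR_lt in Hc.
  assert (Hsb: 0 < sqrt (IZR b)) by (apply sqrt_lt_R0; lra).
  assert (Hsc: 0 <= sqrt (IZR c)) by apply sqrt_pos.
  assert (Eb := sqrt_sqrt (IZR b) ltac:(lra)).
  assert (Ec := sqrt_sqrt (IZR c) ltac:(lra)).
  assert (H1: INR n * sqrt (IZR b) <= 340134 / 1000000 * sqrt (IZR c)).
  { apply Rmult_le_compat_r with (r := sqrt (IZR b)) in Hle; [|lra].
    replace (340134 / 1000000 * / sqrt (IZR b) * sqrt (IZR c) * sqrt (IZR b)) with (340134 / 1000000 * sqrt (IZR c)) in Hle by (field; lra).
    exact Hle. }
  assert (Hn0 : 0 <= INR n) by apply pos_INR.
  assert (H2: (INR n * sqrt (IZR b)) * (INR n * sqrt (IZR b)) <= (340134 / 1000000 * sqrt (IZR c)) * (340134 / 1000000 * sqrt (IZR c))).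
  { apply Rmult_le_compat; nra. }
  replace ((INR n * sqrt (IZR b)) * (INR n * sqrt (IZR b))) with (INR n * INR n * (sqrt (IZR b) * sqrt (IZR b))) in H2 by ring.
  replace ((340134 / 1000000 * sqrt (IZR c)) * (340134 / 1000000 * sqrt (IZR c))) with ((340134 / 1000000)*(340134 / 1000000) * (sqrt (IZR c) * sqrt (IZR c))) in H2 by ring.
  rewrite Eb, Ec in H2.
  apply le_IZR. rewrite !mult_IZR. rewrite <- INR_IZR_INZ. lra.
Qed.

Lemma small_odd (n : nat) (b c : Z) : (0 < b)%Z -> (0 < c)%Z ->
  INR n <= (9226 / 100000) * / sqrt (IZR b) * sqrt (sqrt (IZR c)) ->
  (100000000000000000000 * ((Z.of_nat n * Z.of_nat n) * (Z.of_nat n * Z.of_nat n)) * (b*b) <= 7245257099093776 * c)%Z.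
Proof.
  intros Hb Hc Hle. apply IZR_lt in Hb. apply IZR_lt in Hc.
  assert (Hsb: 0 < sqrt (IZR b)) by (apply sqrt_lt_R0; lra).
  assert (Hsc: 0 <= sqrt (IZR c)) by apply sqrt_pos.
  assert (Hssc: 0 <= sqrt (sqrt (IZR c))) by apply sqrt_pos.
  assert (Eb := sqrt_sqrt (IZR b) ltac:(lra)).
  assert (Ec := sqrt_sqrt (IZR c) ltac:(lra)).
  assert (Ec2 := sqrt_sqrt (sqrt (IZR c)) Hsc).
  set (k := 9226 / 100000) in *.
  assert (Hk: 0 < k) by (unfold k; lra).
  assert (H1: INR n * sqrt (IZR b) <= k * sqrt (sqrt (IZR c))).
  { apply Rmult_le_compat_r with (r := sqrt (IZR b)) in Hle; [|lra].
    replace (k * / sqrt (IZR b) * sqrt (sqrt (IZR c)) * sqrt (IZR b)) with (k * sqrt (sqrt (IZR c))) in Hle by (field; lra).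
    exact Hle. }
  assert (Hn0 : 0 <= INR n) by apply pos_INR.
  assert (H2: (INR n * sqrt (IZR b)) * (INR n * sqrt (IZR b)) <= (k * sqrt (sqrt (IZR c))) * (k * sqrt (sqrt (IZR c)))).
  { apply Rmult_le_compat; nra. }
  replace ((INR n * sqrt (IZR b)) * (INR n * sqrt (IZR b))) with (INR n * INR n * (sqrt (IZR b) * sqrt (IZR b))) in H2 by ring.
  replace ((k * sqrt (sqrt (IZR c))) * (k * sqrt (sqrt (IZR c)))) with (k*k * (sqrt (sqrt (IZR c)) * sqrt (sqrt (IZR c)))) in H2 by ring.
  rewrite Eb, Ec2 in H2.
  assert (H3: (INR n * INR n * IZR b) * (INR n * INR n * IZR b) <= (k*k*sqrt (IZR c)) * (k*k*sqrt (IZR c))).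
  { apply Rmult_le_compat; try nra. }
  replace ((k*k*sqrt (IZR c)) * (k*k*sqrt (IZR c))) with (k*k*(k*k)*(sqrt (IZR c) * sqrt (IZR c))) in H3 by ring.
  rewrite Ec in H3. unfold k in H3.
  apply le_IZR. rewrite !mult_IZR. rewrite <- INR_IZR_INZ. lra.
Qed.

Theorem mainTheorem10
  (a1 a2 b c d r2 s2 t z : Z)
  (Hord : (0 < a1 < a2)%Z /\ (a2 < b < c)%Z /\ (c < d)%Z)
  (HQ1 : D4_quadruple a1 b c d)
  (HQ2 : D4_quadruple a2 b c d)
  (Hr2 : (0 < r2)%Z /\ (a2 * b + 4 = r2 ^ 2)%Z)
  (Hs2 : (0 < s2)%Z /\ (a2 * c + 4 = s2 ^ 2)%Z)
  (Ht : (0 < t)%Z /\ (b * c + 4 = t ^ 2)%Z)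
  (Hz : (0 < z)%Z /\ (c * d + 4 = z ^ 2)%Z)
  (Hc1 : IZR c > (56 / 100) * IZR b ^ 3)
  (Hc2 : IZR c > (1 / 1000) * IZR a2 ^ 2 * IZR b ^ 2)
  (Hb : IZR b > 10 ^ 5)
  (m n : nat)
  (Hn : (4 <= n)%nat)
  (Hrep : z_rep c r2 s2 t z m n) :
  Nat.even m = Nat.even n /\
  (Nat.odd n = true ->
     INR n > (9226 / 100000) * / sqrt (IZR b) * sqrt (sqrt (IZR c))) /\
  (Nat.even n = true ->
     INR n > (340134 / 1000000) * / sqrt (IZR b) * sqrt (IZR c)).
Proof.
  destruct Hord as [[Ha1 Ha12] [[Hab Hbc] Hcd]].
  destruct Hr2 as [Hr0 Hr]. destruct Hs2 as [Hs0 Hs]. destruct Ht as [Ht0 Ht2].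
  rewrite Z.pow_2_r in Hr, Hs, Ht2.
  assert (Ha: (2 <= a2)%Z) by lia.
  assert (Hbz: (100000 < b)%Z).
  { apply lt_IZR. replace (10^5) with 100000 in Hb by ring. lra. }
  assert (Hc1z: (56*(b*b*b) < 100*c)%Z).
  { apply lt_IZR. rewrite !mult_IZR. replace (IZR b^3) with (IZR b * IZR b * IZR b) in Hc1 by ring. lra. }
  assert (Hc2z: (a2*a2*(b*b) < 1000*c)%Z).
  { apply lt_IZR. rewrite !mult_IZR. replace (IZR a2^2) with (IZR a2 * IZR a2) in Hc2 by ring.
    replace (IZR b^2) with (IZR b * IZR b) in Hc2 by ring. lra. }
  destruct (basic_facts a2 b c s2 t Ha Hab Hbz Hc1z Hs0 Ht0 (eq_sym Hs) (eq_sym Ht2)) as [Hcb [Hst [Hs3 [Ht4 Hts]]]].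
  destruct Hrep as [z0 [x0 [z1 [y1 [Hv [Hw Hcase]]]]]].
  change (wseq t c z1 y1 n) with (vseq t c z1 y1 n) in Hw.
  split.
  { destruct Hcase as [[Hm [Hn' _]] | [Hm [Hn' _]]].
    - rewrite Hm, Hn'; auto.
    - rewrite <- !Nat.negb_odd, Hm, Hn'. reflexivity. }
  split.
  -
    intro Hodd.
    destruct Hcase as [[Hm [Hn' _]]|[Hm [Hn' [Hx0 [Hy1 [Hz0 [Hz1 Hzz]]]]]]].
    { rewrite <- Nat.negb_odd, Hodd in Hn'. discriminate. }
    apply Rnot_le_gt. intro Hle.
    apply small_odd in Hle; [|lia|lia].
    destruct (proj1 (Nat.odd_spec m) Hm) as [M HM].
    destruct (proj1 (Nat.odd_spec n) Hn') as [N HN].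
    assert (He: exists e, (e = 1 \/ e = -1)%Z /\ z0 = (e*t)%Z /\ z1 = (e*s2)%Z).
    { destruct (Z_lt_ge_dec z0 0).
      - exists (-1)%Z. assert (z1 < 0)%Z by nia. lia.
      - exists 1%Z. assert (z0 > 0)%Z by lia. assert (z1 > 0)%Z by nia. lia. }
    destruct He as [e [He [Hz0e Hz1e]]]. subst z0 z1 x0 y1 m n.
    assert (HN2: (2 <= N)%nat) by lia.
    assert (Heq: vseq s2 c (e*t) r2 (2*M+1) = vseq t c (e*s2) r2 (2*N+1)) by (rewrite <- Hv, <- Hw; reflexivity).
    assert (Hh: (2*s2 <= s2*(e*t) + c*r2)%Z /\ (2*(e*t) <= s2*(e*t) + c*r2)%Z).
    { destruct He; subst e.
      - assert (s2*2 <= s2*t)%Z by (apply Z.mul_le_mono_nonneg_l; lia).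
        assert (2*t <= s2*t)%Z by (apply Z.mul_le_mono_nonneg_r; lia).
        assert (0 < c*r2)%Z by (apply Z.mul_pos_pos; lia).
        replace (s2*(1*t))%Z with (s2*t)%Z by ring. lia.
      - pose proof (h_fact a2 b c r2 s2 t Ha Hab Hbz Hcb Hc2z Hs0 Ht0 Hr0 Hst Ht4 (eq_sym Hs) (eq_sym Ht2) (eq_sym Hr)).
        replace (s2*(t+2))%Z with (s2*t + 2*s2)%Z in H by ring.
        replace (s2*(-1*t))%Z with (-(s2*t))%Z by ring.
        assert (0 <= s2*t)%Z by (apply Z.mul_nonneg_nonneg; lia). lia. }
    destruct Hh as [Hh1 Hh2].
    destruct (odd_growth s2 t c r2 e M N Hs3 Hst Hts He Hh1 Hh2 Heq) as [Hxy HMN].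
    assert (Ez: zs s2 (2*(e*t)) (s2*(e*t) + c*r2) (2*M+1) = zs t (2*(e*s2)) (t*(e*s2) + c*r2) (2*N+1)).
    { apply eq_IZR. rewrite <- !vseq_zs. rewrite Heq. reflexivity. }
    destruct (odd_form s2 a2 c (e*t) r2 (eq_sym Hs) M) as [q1 Hq1].
    destruct (odd_form t b c (e*s2) r2 (eq_sym Ht2) N) as [q2 Hq2].
    rewrite Hq1, Hq2 in Ez.
    assert (HX: (e*s2*t*(a2*tri M - b*tri N) + 2*r2*(Z.of_nat M - Z.of_nat N) = c*(q2-q1))%Z).
    { apply Z.mul_reg_l with c; [lia|].
      transitivity (c * (r2 + a2 * s2 * (e * t) * tri M + 2 * r2 * Z.of_nat M) - c * (r2 + b * t * (e * s2) * tri N + 2 * r2 * Z.of_nat N))%Z; [ring|].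
      transitivity (c^2*q2 - c^2*q1)%Z; [lia|ring]. }
    assert (HsmallZ : (100000000000000000000 * ((2*Z.of_nat N+1)*(2*Z.of_nat N+1)*((2*Z.of_nat N+1)*(2*Z.of_nat N+1))) * (b*b) <= 7245257099093776 * c)%Z).
    { replace (2*Z.of_nat N+1)%Z with (Z.of_nat (2*N+1)) by lia. exact Hle. }
    assert (HeZ: (e*e = 1)%Z) by (destruct He; subst; reflexivity).
    destruct (odd_arith a2 b c r2 s2 t e (Z.of_nat M) (Z.of_nat N) (q2-q1) (tri M) (tri N)
       Ha Hab Hbz Hcb Hs0 Ht0 Hr0 (eq_sym Hs) (eq_sym Ht2) (eq_sym Hr) HeZ
       ltac:(lia) ltac:(lia) ltac:(lia) (tri_spec M) (tri_spec N) HX HsmallZ) as [HNM HaM].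
    destruct (odd_small a2 b c s2 t (Z.of_nat M) (Z.of_nat N) ltac:(lia) ltac:(lia) ltac:(lia) Hs3 Ht0 Ha Hbz Hcb
       (eq_sym Hs) (eq_sym Ht2) HsmallZ) as [HM1 HN1].
    rewrite pow_mult, pow_mult in Hxy.
    apply (lnarg (IZR a2) (IZR b) (IZR c) (IZR s2) (IZR t) (INR M) (INR N) (INR M - INR N) M N); auto.
    + ring.
    + rewrite !INR_IZR_INZ. assert (IZR (Z.of_nat N + 1) <= IZR (Z.of_nat M)) by (apply IZR_le; lia).
      rewrite plus_IZR in H. lra.
    + apply le_INR in HMN. rewrite mult_INR in HMN. simpl (INR 2) in HMN. lra.
    + apply le_INR in HN2. simpl (INR 2) in HN2. lra.
    + apply (IZR_lt 0); lia.
    + apply (IZR_lt 0); lia.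
    + apply (IZR_lt 1); lia.
    + apply (IZR_lt 0); lia.
    + apply (IZR_lt 0); lia.
    + clear Hxy Heq Hv Hw. rewrite !INR_IZR_INZ. apply Rle_ge. apply Z.ge_le in HaM. apply IZR_le in HaM.
      rewrite !mult_IZR, !plus_IZR, !minus_IZR, !mult_IZR, !plus_IZR in HaM. exact HaM.
    + clear Hxy Heq Hv Hw. apply IZR_le in HM1. rewrite !mult_IZR, !minus_IZR, !mult_IZR in HM1.
      assert (HsR: IZR s2 * IZR s2 = IZR a2 * IZR c + 4) by (rewrite <- !mult_IZR, <- Hs, plus_IZR; reflexivity).
      replace (INR M * (IZR a2 * IZR c - (IZR s2 - 1) ^ 2)) with (INR M * (2 * IZR s2 - 5)).
      2:{ replace (IZR a2 * IZR c) with (IZR s2 * IZR s2 - 4) by lra. ring. }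
      rewrite INR_IZR_INZ. simpl pow. lra.
    + clear Hxy Heq Hv Hw. apply IZR_le in HN1. rewrite !mult_IZR, !plus_IZR, !mult_IZR in HN1.
      assert (HtR: IZR t * IZR t = IZR b * IZR c + 4) by (rewrite <- !mult_IZR, <- Ht2, plus_IZR; reflexivity).
      replace ((IZR t + 1) ^ 2 - IZR b * IZR c) with (5 + 2 * IZR t).
      2:{ simpl pow. lra. }
      rewrite INR_IZR_INZ. lra.
    + rewrite <- mult_IZR. apply (IZR_le 10000000000).
      assert (2*c <= a2*c)%Z by (apply Z.mul_le_mono_nonneg_r; lia). lia.
  -
    intro Heven.
    destruct Hcase as [[Hm [Hn' [Hx0 [Hy1 [Hz0 [Hz1 Hzz]]]]]]|[Hm [Hn' _]]].
    2:{ rewrite <- Nat.negb_odd, Hn' in Heven. discriminate. }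
    apply Rnot_le_gt. intro Hle.
    apply small_even in Hle; [|lia|lia].
    destruct (proj1 (Nat.even_spec m) Hm) as [M HM].
    destruct (proj1 (Nat.even_spec n) Hn') as [N HN].
    assert (He: exists e, (e = 1 \/ e = -1)%Z /\ z0 = (2*e)%Z /\ z1 = (2*e)%Z).
    { destruct (Z_lt_ge_dec z0 0).
      - exists (-1)%Z. assert (z1 < 0)%Z by nia. lia.
      - exists 1%Z. assert (z0 > 0)%Z by lia. assert (z1 > 0)%Z by nia. lia. }
    destruct He as [e [He [Hz0e Hz1e]]]. subst z0 z1 x0 y1 m n.
    assert (HN2: (2 <= N)%nat) by lia.
    assert (Heq: vseq s2 c (2*e) 2 (2*M) = vseq t c (2*e) 2 (2*N)) by (rewrite <- Hv, <- Hw; reflexivity).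
    assert (HMN: (M <= 2*N)%nat).
    { apply (even_growth s2 t c e M N Hs3 Hst Hts ltac:(lia) He ltac:(lia) Heq). }
    assert (Ez: zs s2 (2*(2*e)) (s2*(2*e) + c*2) (2*M) = zs t (2*(2*e)) (t*(2*e) + c*2) (2*N)).
    { apply eq_IZR. rewrite <- !vseq_zs. rewrite Heq. reflexivity. }
    destruct (even_form s2 a2 c (2*e) 2 (eq_sym Hs) M) as [q1 Hq1].
    destruct (even_form t b c (2*e) 2 (eq_sym Ht2) N) as [q2 Hq2].
    rewrite Hq1, Hq2 in Ez.
    assert (HY: (2*(e*(a2*Z.of_nat M*Z.of_nat M - b*Z.of_nat N*Z.of_nat N) + s2*Z.of_nat M - t*Z.of_nat N) = c*(q2-q1))%Z).
    { apply Z.mul_reg_l with c; [lia|].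
      transitivity (c * (a2 * (2 * e) * Z.of_nat M ^ 2 + s2 * 2 * Z.of_nat M) - c * (b * (2 * e) * Z.of_nat N ^ 2 + t * 2 * Z.of_nat N))%Z; [ring|].
      transitivity (c^2*q2 - c^2*q1)%Z; [lia|ring]. }
    assert (HsmallZ : (4000000000000 * (b*Z.of_nat N*Z.of_nat N) <= 115691137956 * c)%Z).
    { replace (Z.of_nat (2*N)) with (2*Z.of_nat N)%Z in Hle by lia.
      replace (4000000000000 * (b*Z.of_nat N*Z.of_nat N))%Z with (1000000000000 * (2 * Z.of_nat N * (2 * Z.of_nat N)) * b)%Z by ring.
      exact Hle. }
    assert (HeZ: (e*e = 1)%Z) by (destruct He; subst; reflexivity).
    apply (even_arith a2 b c s2 t e (Z.of_nat M) (Z.of_nat N) (q2-q1)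
       Ha Hab Hbz Hcb Hs0 Ht0 (eq_sym Hs) (eq_sym Ht2) HeZ
       ltac:(lia) ltac:(lia) ltac:(lia) HY HsmallZ).
Qed.
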